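(* Let $\mathbf v=(v_1,\dots,v_m)$ and $\mathbf k=(k_1,\dots,k_m)$ be $m$-tuples of positive integers with $k_i\le v_i$ for all $i$ and $\sum_i k_i\ge2$. Let $\mathcal D$ be a ${\rm GC}(\mathbf v,\mathbf k,2)$ with $N$ blocks and let $I\subseteq\{1,\dots,m\}$ be non-empty. Then, provided $\mathbf k^I\neq(1)$, there exists a ${\rm GC}(\mathbf v^I,\mathbf k^I,2)$ with $N$ blocks, and in particular $C(\mathbf v,\mathbf k,2)\ge C(\mathbf v^I,\mathbf k^I,2)$.
   Context: For an $m$-tuple $\mathbf x$ and a non-empty $I\subseteq\{1,\dots,m\}$, the restriction $\mathbf x^I$ is the tuple of entries of $\mathbf x$ in positions from $I$ (in increasing order). For tuples $\mathbf v,\mathbf k$ of positive integers of the same length $n$ with $\mathbf k\le\mathbf v$ entrywise: let $X_1,\dots,X_n$ be pairwise disjoint sets with $|X_i|=v_i$; a block is an $n$-tuple $(B_1,\dots,B_n)$ with $B_i\subseteq X_i$, $|B_i|=k_i$; an $n$-tuple of sets $(T_1,\dots,T_n)$ is $(\mathbf v,\mathbf k,2)$-admissible if $T_i\subseteq X_i$, $|T_i|\le k_i$ and $\sum|T_i|=2$, and is contained in a block if $T_i\subseteq B_i$ for all $i$. A ${\rm GC}(\mathbf v,\mathbf k,2)$ is a finite family (repetitions allowed) of blocks containing every admissible tuple in at least one block; $C(\mathbf v,\mathbf k,2)$ is its minimum possible number of blocks, with $C=0$ if no design exists. *)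

(* Defs.v *)
From mathcomp Require Import all_boot.
From mathcomp Require Import boolp.
Set Implicit Arguments. Unset Strict Implicit. Unset Printing Implicit Defensive.

(* The ground set X_i is
   modelled as 'I_(v i); the sets X_i are disjoint by construction (they live
   in distinct types). *)
Definition settuple (m : nat) (v : 'I_m -> nat) := forall i : 'I_m, {set 'I_(v i)}.

Definition is_block m (v k : 'I_m -> nat) (B : settuple v) : Prop :=
  forall i, #|B i| = k i.

Definition admissible m (v k : 'I_m -> nat) (T : settuple v) : Prop :=
  (forall i, #|T i| <= k i) /\ \sum_(i < m) #|T i| = 2.

Definition contained_in m (v : 'I_m -> nat) (T B : settuple v) : Prop :=
  forall i, T i \subset B i.

(* A GC(v,k,2) with N blocks (repetitions allowed), given as an N-indexed family. *)
Definition is_GC m (v k : 'I_m -> nat) (N : nat) (D : 'I_N -> settuple v) : Prop :=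
  (forall j, is_block k (D j)) /\
  (forall T : settuple v, admissible k T -> exists j, contained_in T (D j)).

Definition GC_exists m (v k : 'I_m -> nat) (N : nat) : Prop :=
  exists D : 'I_N -> settuple v, is_GC k D.

(* C(v,k,2): minimum number of blocks of a GC(v,k,2), 0 if none exists. *)
Definition C_num m (v k : 'I_m -> nat) : nat :=
  match pselect (exists N, (fun n => `[< GC_exists v k n >]) N) with
  | left h => ex_minn h
  | right _ => 0
  end.

(* restriction x^I of an m-tuple to the positions in I, in increasing order *)
Definition restr m (I : {set 'I_m}) (x : 'I_m -> nat) : 'I_#|I| -> nat :=
  fun j => x (enum_val j).
Arguments restr {m} I x _.

(* Main.v *)
Require Import Defs.
From mathcomp Require Import all_boot.
From mathcomp Require Import boolp.

Section Aux.
Variables (m : nat) (v : 'I_m -> nat) (I : {set 'I_m}).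
Variable T' : settuple (restr I v).

Definition extT : settuple v := fun i =>
  [set x : 'I_(v i) | [exists j : 'I_#|I|,
     (enum_val j == i) && (val x \in [seq val y | y <- enum (T' j)])]].

Lemma extT_val j : extT (enum_val j) = T' j.
Proof.
apply/setP => x; rewrite inE; apply/existsP/idP.
- case=> j' /andP [/eqP E Hx].
  have ej : j' = j by apply: enum_val_inj.
  subst j'.
  move: Hx => /mapP [y]; rewrite mem_enum => Hy /val_inj -> //.
- move=> Hx; exists j; rewrite eqxx /=; apply/mapP; exists x => //.
  by rewrite mem_enum.
Qed.

Lemma extT_out i : i \notin I -> extT i = set0.
Proof.
move=> Hi; apply/setP => x; rewrite !inE; apply/negbTE/existsP.
case=> j /andP [/eqP E _]; move: Hi; rewrite -E.
by rewrite enum_valP.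
Qed.
End Aux.

Lemma restr_GC (m : nat) (v k : 'I_m -> nat)
  (N : nat) (D : 'I_N -> settuple v) (HD : is_GC k D)
  (I : {set 'I_m}) : GC_exists (restr I v) (restr I k) N.
Proof.
case: HD => Hb Hc.
exists (fun j (i : 'I_#|I|) => D j (enum_val i)); split.
- by move=> j i; apply: Hb.
- move=> T' [Hle Hs].
  have [|j Hj] := Hc (@extT _ _ I T').
    split.
    + move=> i; case: (boolP (i \in I)) => Hi.
      * rewrite -(enum_rankK_in Hi Hi) extT_val; exact: Hle.
      * by rewrite extT_out // cards0.
    + rewrite (bigID (fun i => i \in I)) /=.
      rewrite [X in _ + X]big1; last by move=> i Hi; rewrite extT_out // cards0.
      rewrite addn0 big_enum_val.
      rewrite -Hs; apply: eq_bigr => i _; by rewrite extT_val.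
  exists j => i; rewrite -extT_val; exact: Hj.
Qed.

Theorem proposition3p8 (m : nat) (v k : 'I_m -> nat)
  (kpos : forall i, 0 < k i) (kv : forall i, k i <= v i)
  (ksum : 2 <= \sum_(i < m) k i)
  (N : nat) (D : 'I_N -> settuple v) (HD : is_GC k D)
  (I : {set 'I_m}) (HI : I != set0)
  (HkI : ~ (#|I| = 1 /\ forall j, restr I k j = 1)) :
  GC_exists (restr I v) (restr I k) N /\
  C_num (restr I v) (restr I k) <= C_num v k.
Proof.
split; first exact: restr_GC HD I.
rewrite /C_num.
case: pselect => [h|h]; last first.
  exfalso; apply: h; exists N; apply/asboolP; exact: restr_GC HD I.
case: pselect => [h'|h']; last first.
  exfalso; apply: h'; exists N; apply/asboolP; by exists D.
case: (ex_minnP h') => n0 /asboolP [D0 HD0] _.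
case: (ex_minnP h) => n1 _ Hmin.
apply: Hmin; apply/asboolP; exact: restr_GC HD0 I.
Qed.
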